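(* In the pBeeGees protocol (setting described in the context), if a correct process $p$ enters view $v$, then for every view $v'<v$ some correct process has entered view $v'$.
   Context: Setting (pBeeGees view synchronization). $n=3f+1$ processes, at most $f$ Byzantine, the rest correct; partial synchrony with bound $\Delta$ after GST. Views $v=1,2,\dots$ with leaders $l_v$. A process enters view $v+1$ only upon obtaining either a quorum certificate (QC: $n-f$ votes from distinct processes for the block of view $v$) or a timeout certificate (TC: $n-f$ timeout messages for view $v$ from distinct processes). A correct process in view $v$ that has not advanced after waiting time $F(v)$ times out and broadcasts a timeout message for view $v$; a correct process that receives $f+1$ timeout messages for view $v$ also broadcasts its own timeout message for view $v$. *)

(* Defs.v *)
From mathcomp Require Import all_boot.
Set Implicit Arguments. Unset Strict Implicit. Unset Printing Implicit Defensive.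

Inductive msg (B : Type) : Type :=
  | Vote (u : nat) (b : B)
  | Timeout (u : nat).
Arguments Timeout {B} u.

Section Model.
Variables (n f : nat) (B : Type).
(* Discrete global time t : nat.
   view p t       : the view process p is in at time t.
   sent q m t     : q sends (broadcasts) message m at time t.
   recv p q m t   : p has received, by time t, message m authenticated as sent by q. *)
Variables (view : 'I_n -> nat -> nat)
          (sent : 'I_n -> msg B -> nat -> Prop)
          (recv : 'I_n -> 'I_n -> msg B -> nat -> Prop).

Definition has_QC (p : 'I_n) (u t : nat) : Prop :=
  exists (b : B) (S : {set 'I_n}), n - f <= #|S| /\ forall q, q \in S -> recv p q (Vote u b) t.

Definition has_TC (p : 'I_n) (u t : nat) : Prop :=
  exists S : {set 'I_n}, n - f <= #|S| /\ forall q, q \in S -> recv p q (Timeout u) t.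

Definition pbeegees_rules (correct : {set 'I_n}) (F : nat -> nat) : Prop :=
  (forall p, p \in correct -> view p 0 = 1) /\
  (forall p t, p \in correct -> view p t.+1 <> view p t ->
     exists u, view p t.+1 = u.+1 /\ 1 <= u /\ (has_QC p u t.+1 \/ has_TC p u t.+1)) /\
  (* authenticated channels: a message attributed to a correct sender was sent earlier *)
  (forall p q m t, q \in correct -> recv p q m t -> exists2 t', t' < t & sent q m t') /\
  (forall q u b t, q \in correct -> sent q (Vote u b) t -> view q t = u) /\
  (forall q u t, q \in correct -> sent q (Timeout u) t ->
     (exists t0, t0 + F u <= t /\ forall s, t0 <= s <= t -> view q s = u) \/
     (exists S : {set 'I_n}, f.+1 <= #|S| /\ forall r, r \in S -> recv q r (Timeout u) t)).

Definition enters (p : 'I_n) (v : nat) : Prop := exists t, view p t = v.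

End Model.

(* Main.v *)
Require Import Defs.
From mathcomp Require Import all_boot.
From mathcomp Require Import zify.
From Stdlib Require Import Lia.

Lemma pick_correct (n f : nat) (correct S : {set 'I_n}) :
  #|~: correct| <= f -> f < #|S| -> exists2 q, q \in S & q \in correct.
Proof.
move=> Hc HS.
case: (boolP [exists q, (q \in S) && (q \in correct)]).
  by move/existsP=> [q /andP[h1 h2]]; exists q.
move=> Hn; exfalso.
have sub : S \subset ~: correct.
  apply/subsetP=> q qS; rewrite inE; apply/negP=> qc.
  by move/negP: Hn; apply; apply/existsP; exists q; rewrite qS qc.
have := subset_leq_card sub => H.
have : #|S| <= f by apply: leq_trans H Hc.
by rewrite leqNgt HS.
Qed.

Theorem lemma6 (n f : nat) (B : Type)
    (view : 'I_n -> nat -> nat)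
    (sent : 'I_n -> msg B -> nat -> Prop)
    (recv : 'I_n -> 'I_n -> msg B -> nat -> Prop)
    (correct : {set 'I_n}) (F : nat -> nat) :
  n = 3 * f + 1 ->
  #|~: correct| <= f ->
  pbeegees_rules f view sent recv correct F ->
  forall (p : 'I_n) (v : nat), p \in correct -> enters view p v ->
  forall v' : nat, 1 <= v' < v ->
  exists2 q : 'I_n, q \in correct & enters view q v'.
Proof.
move=> Hn Hc [H0 [Hstep [Hauth [Hvote Hto]]]].
have Hquorum : f < n - f by rewrite Hn; apply/leP; lia.
have Htimeout : forall t q u, q \in correct -> sent q (Timeout u) t ->
    exists2 r, r \in correct & enters view r u.
  elim/ltn_ind=> t IH q u qc hs.
  case: (Hto q u t qc hs).
    move=> [t0 [H Hs]]; exists q => //; exists t; apply: Hs.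
    by rewrite leqnn andbT; apply: leq_trans (leq_addr _ _) H.
  move=> [S [HS HR]].
  have [r rS rc] := @pick_correct n f correct _ Hc HS.
  have [t' lt' st'] := Hauth q r _ _ rc (HR r rS).
  exact: (IH t' lt' r u rc st').
have Hdown : forall q w, q \in correct -> enters view q w -> w != 1 ->
    exists2 r, r \in correct & enters view r w.-1.
  move=> q w qc [t ht] hw.
  have [s [hs1 hs2]] : exists s, view q s.+1 = w /\ view q s.+1 <> view q s.
    elim: t ht => [|t IHt] ht; first by rewrite H0 // in ht; rewrite ht eqxx in hw.
    case: (eqVneq (view q t) w) => e; first exact: IHt.
    by exists t; split=> //; rewrite ht; apply/eqP; rewrite eq_sym.
  have [u [hu1 [hu2 hqt]]] := Hstep q s qc hs2.
  have -> : w.-1 = u by rewrite -hs1 hu1.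
  case: hqt => [[b [S [HS HR]]]|[S [HS HR]]].
    have [r rS rc] := @pick_correct n f correct _ Hc (leq_trans Hquorum HS).
    have [t' _ st'] := Hauth q r _ _ rc (HR r rS).
    by exists r => //; exists t'; apply: (Hvote r u b t' rc st').
  have [r rS rc] := @pick_correct n f correct _ Hc (leq_trans Hquorum HS).
  have [t' _ st'] := Hauth q r _ _ rc (HR r rS).
  exact: (Htimeout t' r u rc st').
move=> p v pc hv v' /andP[h1 h2].
have key : forall k w, v' + k = w -> (exists2 q, q \in correct & enters view q w) ->
    exists2 q, q \in correct & enters view q v'.
  elim=> [|k IHk] w hw [q qc he]; first by rewrite addn0 in hw; subst; exists q.
  have hw1 : w != 1 by rewrite -hw; apply/eqP; lia.
  have [r rc hr] := Hdown q w qc he hw1.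
  apply: (IHk w.-1) => //; last by exists r.
  by rewrite -hw addnS.
have e : v' + (v - v') = v by rewrite subnKC // ltnW.
exact: (key (v - v') v e (ex_intro2 _ _ p pc hv)).
Qed.
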